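(* In the sequential execution of a structured local-touch computation in which the future thread at every fork is chosen to execute first: for every touch $x$, the future parent of $x$ is executed before the local parent of $x$; and for every fork $v$, the right child of $v$ is the node executed immediately after the last node of the future thread spawned at $v$.
   Context: Computation model. A future-parallel computation is a finite DAG whose nodes are tasks. Every node has in-degree and out-degree in $\{1,2\}$, except a distinguished root node (in-degree $0$) and a distinguished final node (out-degree $0$). Edges are continuation edges, future edges and touch edges. A thread is a maximal chain of nodes connected by continuation edges. The main thread begins at the root and ends at the final node. Every other thread $t$ begins at a node with an incoming future edge from a node $v$ of another thread $t'$; then $v$ is the fork of $t$, $t'$ is the parent thread of $t$, and $t$ is the future thread at $v$. A fork $v$ has two children: the first node of $t$ (the left child) and the continuation successor of $v$ in $t'$ (the right child); both have in-degree $1$ and are not touches. The last node of every non-main thread has exactly one outgoing edge, a touch edge into another thread. If there is a touch edge from node $v_1$ of thread $t_1$ to node $v_2$ of thread $t_2\neq t_1$, and a continuation edge from $u_2$ to $v_2$, then $v_2$ is a touch of $t_1$, $v_1$ its future parent, $u_2$ its local parent. A node $w$ is a descendant of $u$ if there is a directed path from $u$ to $w$. A DAG is a structured future-parallel computation if for the future thread $t$ of any fork $v$: (1) the local parents of the touches of $t$ are descendants of $v$, and (2) at least one touch of $t$ is a descendant of the right child of $v$. It is a structured local-touch computation if, in addition, each future thread $t$ spawned at a fork $v$ is touched only at nodes of the parent thread of $t$, and all these touches are descendants of the right child of $v$ (a future thread may have several touches). Scheduler. In parsimonious work stealing each processor has a deque. A node is ready when all its parents have been executed. After executing a node of out-degree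 1, a processor continues with its child if ready. After a fork it executes the left child (future thread first) and pushes the right child onto the bottom of its deque. A processor with nothing to execute pops the bottom of its own deque if nonempty, and otherwise steals the top node of another processor's deque. The sequential execution is the execution with one processor.
   Formalization: Every touch edge of the computation starts at a node outside the main thread, so only future threads are ever touched. The paper assumes this as well. *)

(* Defs.v *)
From mathcomp Require Import all_boot.
Set Implicit Arguments. Unset Strict Implicit. Unset Printing Implicit Defensive.

Inductive ekind := Cont | Fut | Tch.

(* A computation DAG on a finite node type [V]: [kind u v = Some k] iff there
   is an edge of kind [k] from [u] to [v]; distinguished root and final node. *)
Record fcomp (V : finType) := Comp {
  kind : V -> V -> option ekind;
  root : V;
  final : V
}.

Section Defs.
Variables (V : finType) (C : fcomp V).

Definition cont : rel V := fun u v => if kind C u v is Some Cont then true else false.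
Definition fut  : rel V := fun u v => if kind C u v is Some Fut  then true else false.
Definition tch  : rel V := fun u v => if kind C u v is Some Tch  then true else false.
Definition edge : rel V := fun u v => if kind C u v is Some _ then true else false.

Definition indeg (v : V) : nat := #|[pred u | edge u v]|.
Definition outdeg (v : V) : nat := #|[pred w | edge v w]|.

Definition desc (u w : V) : bool := connect edge u w.

(* threads = maximal continuation chains *)
Definition same_thread (u v : V) : bool := connect cont u v || connect cont v u.
Definition first_node (v : V) : bool := [forall u, ~~ cont u v].
Definition last_node (v : V) : bool := [forall w, ~~ cont v w].
Definition in_main (v : V) : bool := same_thread (root C) v.

(* v2 is a touch (with future parent v1 and local parent u2) *)
Definition touch_with (v1 u2 v2 : V) : bool :=
  [&& tch v1 v2, ~~ same_thread v1 v2 & cont u2 v2].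
Definition is_touch (v2 : V) : bool := [exists v1, exists u2, touch_with v1 u2 v2].

Definition wf_comp : Prop :=
  (forall u v, edge u v -> ~~ connect edge v u) /\
  (forall v, if v == root C then indeg v = 0 else 1 <= indeg v <= 2) /\
  (forall v, if v == final C then outdeg v = 0 else 1 <= outdeg v <= 2) /\
  (forall u v w, cont u v -> cont u w -> v = w) /\
  (forall u v w, cont u w -> cont v w -> u = v) /\
  same_thread (root C) (final C) /\
  (forall v, first_node v -> ~~ in_main v ->
     exists u, fut u v /\ ~~ same_thread u v) /\
  (* forks: the left child is the first node of the future thread, the right
     child is the continuation successor; both have in-degree 1, no touches *)
  (forall u l, fut u l ->
     [/\ first_node l, ~~ same_thread u l, indeg l = 1, ~~ is_touch l &
      exists r, [/\ cont u r, indeg r = 1 & ~~ is_touch r]]) /\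
  (forall v, last_node v -> ~~ in_main v ->
     outdeg v = 1 /\ exists w, tch v w /\ ~~ same_thread v w) /\
  (* (implicit in the model) touch edges leave future threads *)
  (forall u v, tch u v -> ~~ in_main u).

(* "touch of the future thread spawned at the fork v with left child l":
   a touch whose future parent lies in the thread of l *)
Definition structured : Prop :=
  forall v l r, fut v l -> cont v r ->
    (forall v1 u2 x, same_thread l v1 -> touch_with v1 u2 x -> desc v u2) /\
    (exists v1 u2 x, [/\ same_thread l v1, touch_with v1 u2 x & desc r x]).

Definition structured_local_touch : Prop :=
  structured /\
  forall v l r, fut v l -> cont v r ->
    forall v1 u2 x, same_thread l v1 -> touch_with v1 u2 x ->
      same_thread v x /\ desc r x.

(* Sequential parsimonious work stealing. A configuration is
   (node to execute now (if any), deque (bottom = end of list),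
    executed nodes in execution order). *)
Definition config := (option V * seq V * seq V)%type.

Definition ready (done : seq V) (w : V) : bool :=
  [forall u, edge u w ==> (u \in done)].

Definition ready_children (done : seq V) (v : V) : seq V :=
  [seq w <- enum V | edge v w && ready done w].

Inductive seq_step : config -> config -> Prop :=
  | step_fork v l r dq d :
      fut v l -> cont v r ->
      seq_step (Some v, dq, d) (Some l, rcons dq r, rcons d v)
  | step_stall v dq d :
      (forall w, ~~ fut v w) -> ready_children (rcons d v) v = [::] ->
      seq_step (Some v, dq, d) (None, dq, rcons d v)
  (* non-fork node: continue with a ready child (any remaining ready child,
     possible only for a non-fork node of out-degree 2, is pushed) *)
  | step_cont v w rest dq d :
      (forall w', ~~ fut v w') ->
      perm_eq (w :: rest) (ready_children (rcons d v) v) ->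
      seq_step (Some v, dq, d) (Some w, dq ++ rest, rcons d v)
  | step_pop w dq d :
      seq_step (None, rcons dq w, d) (Some w, dq, d).

Inductive seq_steps : config -> config -> Prop :=
  | steps_refl c : seq_steps c c
  | steps_trans c1 c2 c3 : seq_step c1 c2 -> seq_steps c2 c3 -> seq_steps c1 c3.

Definition sequential_execution (ex : seq V) : Prop :=
  seq_steps (Some (root C), [::], [::]) (None, [::], ex).

End Defs.

(* Main.v *)
Require Import Defs.
From mathcomp Require Import all_boot.
Set Implicit Arguments. Unset Strict Implicit. Unset Printing Implicit Defensive.

Section Gen.
Variable T : finType.

Lemma conn_last (e : rel T) x y : connect e x y -> x != y ->
  exists p, connect e x p /\ e p y.
Proof.
move/connectP=> [s]; elim/last_ind: s => [|s z _] /=; first by move=> _ -> /eqP.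
rewrite rcons_path last_rcons => /andP[hp he] -> _.
exists (last x s); split=> //; apply/connectP; by exists s.
Qed.

Lemma conn_first (e : rel T) x y : connect e x y -> x != y ->
  exists q, e x q /\ connect e q y.
Proof.
move/connectP=> [[|q s]] /=; first by move=> _ -> /eqP.
move=> /andP[he hp] -> _; exists q; split=> //; apply/connectP; by exists s.
Qed.

Lemma conn_fwd (e : rel T) (efun : forall u v w, e u v -> e u w -> v = w) a x y :
  connect e a x -> connect e a y -> connect e x y || connect e y x.
Proof.
move/connectP=> [s]; elim: s a => [|b s IH] a /=.
  by move=> _ -> ->.
move=> /andP[hab hp] hx hy.
have [->|nya] := eqVneq y a.
  apply/orP; right; apply/connectP; exists (b :: s) => //=; by rewrite hab.
have nay : a != y by rewrite eq_sym.
have [q [haq hq]] := conn_first hy nay.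
move: hq; rewrite (efun _ _ _ haq hab) => hq.
exact: IH hp hx hq.
Qed.

Lemma conn_bwd (e : rel T) (einj : forall u v w, e u w -> e v w -> u = v) a x y :
  connect e x a -> connect e y a -> connect e x y || connect e y x.
Proof.
move=> hx hy.
have hf : forall u v w, [rel p q | e q p] u v -> [rel p q | e q p] u w -> v = w.
  by move=> u v w /= h1 h2; exact: einj h1 h2.
have h1 : connect [rel p q | e q p] a x by rewrite connect_rev.
have h2 : connect [rel p q | e q p] a y by rewrite connect_rev.
have /orP[h|h] := conn_fwd hf h1 h2; apply/orP.
  by right; move: h; rewrite connect_rev.
by left; move: h; rewrite connect_rev.
Qed.

Lemma wf_back (e : rel T) (acyc : forall u v, e u v -> ~~ connect e v u)
  (P : T -> Prop) : (forall x, (forall u, e u x -> P u) -> P x) -> forall x, P x.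
Proof.
move=> IH.
suff: forall n x, #|[pred u | connect e u x]| <= n -> P x.
  by move=> h x; exact: h _ x (leqnn _).
have hlt : forall u x, e u x -> #|[pred y | connect e y u]| < #|[pred y | connect e y x]|.
  move=> u x hu; apply: proper_card; apply/properP; split.
    apply/subsetP=> y; rewrite !inE => hy.
    exact: connect_trans hy (connect1 hu).
  exists x; first by rewrite inE connect0.
  by rewrite inE; exact: acyc hu.
elim=> [|n IHn] x hx; apply: IH => u hu.
  by have := hlt _ _ hu; rewrite ltnNge (leq_trans hx (leq0n _)).
apply: IHn; have := hlt _ _ hu; move=> h; exact: leq_trans h hx.
Qed.

Lemma wf_fwd (e : rel T) (acyc : forall u v, e u v -> ~~ connect e v u)
  (P : T -> Prop) : (forall x, (forall w, e x w -> P w) -> P x) -> forall x, P x.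
Proof.
move=> IH.
suff: forall n x, #|[pred u | connect e x u]| <= n -> P x.
  by move=> h x; exact: h _ x (leqnn _).
have hlt : forall x w, e x w -> #|[pred y | connect e w y]| < #|[pred y | connect e x y]|.
  move=> x w hw; apply: proper_card; apply/properP; split.
    apply/subsetP=> y; rewrite !inE => hy.
    exact: connect_trans (connect1 hw) hy.
  exists x; first by rewrite inE connect0.
  by rewrite inE; exact: acyc hw.
elim=> [|n IHn] x hx; apply: IH => w hw.
  by have := hlt _ _ hw; rewrite ltnNge (leq_trans hx (leq0n _)).
apply: IHn; have := hlt _ _ hw; move=> h; exact: leq_trans h hx.
Qed.

End Gen.

Section Basic.
Variables (V : finType) (C : fcomp V).
Hypothesis Hwf : wf_comp C.

Lemma acyc u v : edge C u v -> ~~ connect (edge C) v u.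
Proof. by case: Hwf => h _; exact: h. Qed.

Lemma edge_neq u v : edge C u v -> u != v.
Proof. move=> h; apply/eqP=> e; subst; by move: (acyc h); rewrite connect0. Qed.

Lemma cont_fun u v w : cont C u v -> cont C u w -> v = w.
Proof. by case: Hwf => _ [_ [_ [h _]]]; exact: h. Qed.

Lemma cont_inj u v w : cont C u w -> cont C v w -> u = v.
Proof. by case: Hwf => _ [_ [_ [_ [h _]]]]; exact: h. Qed.

Lemma cont_edge u v : cont C u v -> edge C u v.
Proof. by rewrite /cont /edge; case: kind. Qed.
Lemma fut_edge u v : fut C u v -> edge C u v.
Proof. by rewrite /fut /edge; case: kind. Qed.
Lemma tch_edge u v : tch C u v -> edge C u v.
Proof. by rewrite /tch /edge; case: kind. Qed.
Lemma edge_cases u v : edge C u v -> [\/ cont C u v, fut C u v | tch C u v].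
Proof. by rewrite /cont /fut /tch /edge; case: kind => [[]|] // _; constructor. Qed.
Lemma cont_tch u v : cont C u v -> tch C u v -> False.
Proof. by rewrite /cont /tch; case: kind => [[]|]. Qed.
Lemma cont_fut u v : cont C u v -> fut C u v -> False.
Proof. by rewrite /cont /fut; case: kind => [[]|]. Qed.
Lemma fut_tch u v : fut C u v -> tch C u v -> False.
Proof. by rewrite /fut /tch; case: kind => [[]|]. Qed.

Lemma cc_edge x y : connect (cont C) x y -> connect (edge C) x y.
Proof. apply: connect_sub => u v h; apply: connect1; exact: cont_edge. Qed.

Lemma indeg_uniq x a b : indeg C x = 1 -> edge C a x -> edge C b x -> a = b.
Proof.
rewrite /indeg => /eqP /card1P [z hz] ha hb.
have := hz a; have := hz b; rewrite !inE ha hb => /esym/eqP -> /esym/eqP ->. done.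
Qed.

Lemma indeg_gt0 x u : edge C u x -> 0 < indeg C x.
Proof. move=> h; apply/card_gt0P; exists u; by rewrite inE. Qed.

Lemma outdeg_gt0 x w : edge C x w -> 0 < outdeg C x.
Proof. move=> h; apply/card_gt0P; exists w; by rewrite inE. Qed.

Lemma root_noparent u : ~~ edge C u (Defs.root C).
Proof.
apply/negP=> h; have := indeg_gt0 h.
case: Hwf => _ [hin _]; have := hin (Defs.root C); by rewrite eqxx => ->.
Qed.

Lemma outdeg_le2 v : outdeg C v <= 2.
Proof.
case: Hwf => _ [_ [hout _]]; have := hout v.
by case: eqP => _; [move=> ->|case/andP].
Qed.

Lemma fut_uniq v a b : fut C v a -> fut C v b -> a = b.
Proof.
move=> ha hb; apply/eqP; apply/negPn/negP => nab.
case: Hwf => _ [_ [_ [_ [_ [_ [_ [hfork _]]]]]]].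
have [_ _ _ _ [r [hr _ _]]] := hfork _ _ ha.
have nar : a != r by apply/eqP=> e; subst; exact: cont_fut hr ha.
have nbr : b != r by apply/eqP=> e; subst; exact: cont_fut hr hb.
have hu : uniq [:: a; b; r] by rewrite /= !inE negb_or nab nar nbr.
have : #|[:: a; b; r]| <= outdeg C v.
  apply: subset_leq_card; apply/subsetP=> w; rewrite !inE => /or3P[]/eqP->.
  - exact: fut_edge.
  - exact: fut_edge.
  - exact: cont_edge.
rewrite (card_uniqP hu) /= => h.
by have := leq_trans h (outdeg_le2 v).
Qed.

Lemma fork_cond u l : fut C u l ->
  [/\ first_node C l, ~~ same_thread C u l, indeg C l = 1, ~~ is_touch C l &
      exists r, [/\ cont C u r, indeg C r = 1 & ~~ is_touch C r]].
Proof. by case: Hwf => _ [_ [_ [_ [_ [_ [_ [hfork _]]]]]]]; exact: hfork. Qed.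

Lemma tch_notmain u v : tch C u v -> ~~ in_main C u.
Proof. by case: Hwf => _ [_ [_ [_ [_ [_ [_ [_ [_ h]]]]]]]]; exact: h. Qed.

Lemma first_fut v : first_node C v -> ~~ in_main C v -> exists u, fut C u v /\ ~~ same_thread C u v.
Proof. by case: Hwf => _ [_ [_ [_ [_ [_ [h _]]]]]]; exact: h. Qed.

Lemma root_first : first_node C (Defs.root C).
Proof. apply/forallP=> u; apply/negP=> h; have := root_noparent u; by rewrite cont_edge. Qed.

Lemma last_conn x y : last_node C x -> connect (cont C) x y -> x = y.
Proof.
move=> hl hc; apply/eqP; apply/negPn/negP => nxy.
have [q [hq _]] := conn_first hc nxy.
by move/forallP: hl => /(_ q); rewrite hq.
Qed.

Lemma first_conn x y : first_node C y -> connect (cont C) x y -> x = y.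
Proof.
move=> hl hc; apply/eqP; apply/negPn/negP => nxy.
have [q [_ hq]] := conn_last hc nxy.
by move/forallP: hl => /(_ q); rewrite hq.
Qed.

Lemma first_exists x : exists f, first_node C f /\ connect (cont C) f x.
Proof.
elim/(wf_back (@acyc)): x => x IH.
case hf: (first_node C x); first by exists x; rewrite connect0.
move/negbT: hf => /forallPn [u]; rewrite negbK => hu.
have [f [hf1 hf2]] := IH u (cont_edge hu).
exists f; split=> //; exact: connect_trans hf2 (connect1 hu).
Qed.

Lemma last_exists x : exists z, last_node C z /\ connect (cont C) x z.
Proof.
elim/(wf_fwd (@acyc)): x => x IH.
case hf: (last_node C x); first by exists x; rewrite connect0.
move/negbT: hf => /forallPn [u]; rewrite negbK => hu.
have [f [hf1 hf2]] := IH u (cont_edge hu).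
exists f; split=> //; exact: connect_trans (connect1 hu) hf2.
Qed.

Lemma thread_first f g x : first_node C f -> first_node C g ->
  connect (cont C) f x -> connect (cont C) g x -> f = g.
Proof.
move=> hf hg h1 h2; have /orP[h|h] := conn_bwd (@cont_inj) h1 h2.
  exact: first_conn hg h.
by apply/esym; exact: first_conn hf h.
Qed.

Lemma thread_last f g x : last_node C f -> last_node C g ->
  connect (cont C) x f -> connect (cont C) x g -> f = g.
Proof.
move=> hf hg h1 h2; have /orP[h|h] := conn_fwd (@cont_fun) h1 h2.
  exact: last_conn hf h.
by apply/esym; exact: last_conn hg h.
Qed.

Lemma same_first l z : first_node C l -> same_thread C l z -> connect (cont C) l z.
Proof. by move=> hl /orP[//|h]; rewrite (first_conn hl h) connect0. Qed.

Lemma in_main_conn x : in_main C x -> connect (cont C) (Defs.root C) x.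
Proof. exact: same_first root_first. Qed.

End Basic.

Section Exec.
Variables (V : finType) (C : fcomp V).
Hypothesis Hwf : wf_comp C.
Hypothesis Hsl : structured_local_touch C.

Inductive Chain : V -> seq V -> Prop :=
| ch_main x : connect (cont C) (Defs.root C) x -> Chain x [::]
| ch_fut x f v r dq : connect (cont C) f x -> first_node C f -> fut C v f ->
    cont C v r -> Chain v dq -> Chain x (rcons dq r).

Lemma Chain_cont c w dq : Chain c dq -> connect (cont C) c w -> Chain w dq.
Proof.
case=> [x hx|x f v r dq' h1 h2 h3 h4 h5] hw.
  apply: ch_main; exact: connect_trans hx hw.
apply: ch_fut h2 h3 h4 h5; exact: connect_trans h1 hw.
Qed.

Lemma Chain_elems x dq y : Chain x dq -> y \in dq -> exists v l, fut C v l /\ cont C v y.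
Proof.
elim=> [//|x' f v r dq' _ _ h3 h4 _ IH].
rewrite mem_rcons inE => /orP[/eqP->|h]; first by exists v, f.
exact: IH.
Qed.

Lemma Chain_nil0 x dq : Chain x dq -> dq = [::] -> connect (cont C) (Defs.root C) x.
Proof. case=> // x' f v r dq' _ _ _ _ _ /eqP; by rewrite -size_eq0 size_rcons. Qed.

Lemma Chain_nil x : Chain x [::] -> connect (cont C) (Defs.root C) x.
Proof. by move=> h; exact: Chain_nil0 h erefl. Qed.

Lemma Chain_rcons0 x s : Chain x s -> forall dq r, s = rcons dq r ->
  exists f v, [/\ connect (cont C) f x, first_node C f, fut C v f, cont C v r & Chain v dq].
Proof.
case=> [x' _ dq r /eqP|x' f v r' dq' h1 h2 h3 h4 h5 dq r e].
  by rewrite eq_sym -size_eq0 size_rcons.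
move: (rcons_inj e) => [e1 e2]; subst; by exists f, v.
Qed.

Lemma Chain_rcons x dq r : Chain x (rcons dq r) ->
  exists f v, [/\ connect (cont C) f x, first_node C f, fut C v f, cont C v r & Chain v dq].
Proof. move=> h; exact: (@Chain_rcons0 x (rcons dq r) h dq r erefl). Qed.

Definition anc (d : seq V) := forall y u, y \in d -> edge C u y -> u \in d /\ index u d < index y d.

Lemma anc_conn d (h : anc d) u y : connect (edge C) u y -> y \in d -> u \in d /\ index u d <= index y d.
Proof.
move/connectP=> [s]; elim: s u => [|b s IH] u /=; first by move=> _ -> ->.
move=> /andP[hub hp] hy hyd.
have [hb hb2] := IH _ hp hy hyd.
have [hu hu2] := h _ _ hb hub.
split=> //; exact: leq_trans (ltnW hu2) hb2.
Qed.

Lemma ready_in d w u : ready C d w -> edge C u w -> u \in d.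
Proof. by move=> /forallP /(_ u) /implyP. Qed.

Lemma anc_ready d (h : anc d) c u : ready C d c -> connect (edge C) u c -> u != c -> u \in d.
Proof.
move=> hr hc nuc; have [p [hp1 hp2]] := conn_last hc nuc.
have hpd := ready_in hr hp2.
by have [] := anc_conn h hp1 hpd.
Qed.

Lemma Hsl2 v l r v1 u2 x : fut C v l -> cont C v r -> same_thread C l v1 ->
  touch_with C v1 u2 x -> same_thread C v x /\ desc C r x.
Proof. move=> a b c e; case: Hsl => _ h; exact: (h v l r a b v1 u2 x c e). Qed.

Lemma thread_pred v r x p : cont C v r -> same_thread C v x -> desc C r x -> cont C p x ->
  connect (cont C) v p.
Proof.
move=> hvr hs hd hpx; rewrite /desc in hd.
have hvx : connect (cont C) v x.
  case/orP: hs => // h.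
  have := acyc Hwf (cont_edge hvr); by rewrite (connect_trans hd (cc_edge h)).
have nvx : v != x.
  apply/eqP=> e; subst; have := acyc Hwf (cont_edge hvr); by rewrite hd.
have [p' [h1 h2]] := conn_last hvx nvx.
by rewrite (cont_inj Hwf h2 hpx) in h1.
Qed.

Lemma childB d dq c w : anc d -> Chain c dq -> c \notin d ->
  (forall y, y \in dq -> y \notin d) -> c \notin dq -> (forall w', ~~ fut C c w') ->
  edge C c w -> ready C (rcons d c) w -> cont C c w.
Proof.
move=> hanc hch hcd hdq hcdq hnf hcw hrw.
case: (edge_cases hcw) => // [hf|ht]; first by have := hnf w; rewrite hf.
exfalso.
have [p hp] : exists p, cont C p w.
  case hf: (first_node C w); last first.
    by move/negbT: hf => /forallPn [p]; rewrite negbK => hp; exists p.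
  have nm : ~~ in_main C w.
    apply/negP=> /(in_main_conn Hwf) h.
    have e := first_conn hf h; subst.
    by have := root_noparent Hwf c; rewrite hcw.
  have [u [hu _]] := first_fut Hwf hf nm.
  have [_ _ hin _ _] := fork_cond Hwf hu.
  have e := indeg_uniq hin (fut_edge hu) (tch_edge ht); subst.
  by have := hnf w; rewrite hu.
have npc : p != c by apply/eqP=> e; subst; exact: cont_tch hp ht.
have hpd := ready_in hrw (cont_edge hp).
move: hpd; rewrite mem_rcons inE (negbTE npc) /= => hpd.
case hs: (same_thread C c w).
  have hcw' : connect (cont C) c w.
    case/orP: hs => // h.
    by have := acyc Hwf hcw; rewrite (cc_edge h).
  have [p' [h1 h2]] := conn_last hcw' (edge_neq Hwf hcw).
  rewrite (cont_inj Hwf h2 hp) in h1.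
  have [hc _] := anc_conn hanc (cc_edge h1) hpd.
  by rewrite hc in hcd.
have htw : touch_with C c p w by rewrite /touch_with ht hs hp.
have nmc := tch_notmain Hwf ht.
case: dq hch hdq hcdq => [|y dq] hch hdq hcdq.
  by move/negP: nmc; apply; rewrite /in_main /same_thread (Chain_nil hch).
have [dq' [r e]] : exists dq' r, y :: dq = rcons dq' r.
  by exists (belast y dq), (last y dq); rewrite lastI.
rewrite e in hch hdq hcdq.
have [f [v [h1 h2 h3 h4 h5]]] := Chain_rcons hch.
have [hs2 hd2] := Hsl2 h3 h4 (introT orP (or_introl h1)) htw.
have hvp := thread_pred h4 hs2 hd2 hp.
have nvp : v != p.
  apply/eqP=> e'; rewrite -e' in hp.
  have e2 := cont_fun Hwf h4 hp.
  have [_ _ _ _ [r' [hr' _ hnt]]] := fork_cond Hwf h3.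
  have e3 := cont_fun Hwf h4 hr'.
  move/negP: hnt; apply; rewrite -e3 e2; apply/existsP; exists c; apply/existsP; exists p; exact: htw.
have [q [hq1 hq2]] := conn_first hvp nvp.
rewrite -(cont_fun Hwf h4 hq1) in hq2.
have hrd : r \notin d by apply: hdq; rewrite mem_rcons mem_head.
have [hr _] := anc_conn hanc (cc_edge hq2) hpd.
by rewrite hr in hrd.
Qed.

Definition I3 (d : seq V) := forall v l r z, fut C v l -> cont C v r ->
  connect (cont C) l z -> last_node C z -> r \in d -> exists s1 s2, d = s1 ++ z :: r :: s2.

Definition S4 (c : V) (d : seq V) := forall v l z, fut C v l -> cont C v c ->
  connect (cont C) l z -> last_node C z -> exists d', d = rcons d' z.

Lemma childA d c w : anc d -> I3 d -> S4 c d -> ready C d c -> c \notin d ->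
  (forall w', ~~ fut C c w') -> cont C c w -> ready C (rcons d c) w.
Proof.
move=> hanc hI3 hS4 hrc hcd hnf hcw.
apply/forallP=> u; apply/implyP=> huw.
rewrite mem_rcons inE; case: eqP => //= nuc.
have nuc' : u != c by apply/eqP.
case: (edge_cases huw) => [hc|hf|ht].
- exfalso; apply: nuc; exact: (@cont_inj V C Hwf u c w hc hcw).
- have [hfw _ _ _ _] := fork_cond Hwf hf.
  by move/forallP: hfw => /(_ c); rewrite hcw.
case hs: (same_thread C u w).
  have huw' : connect (cont C) u w.
    case/orP: hs => // h.
    by have := acyc Hwf huw; rewrite (cc_edge h).
  have [p' [h1 h2]] := conn_last huw' (edge_neq Hwf huw).
  rewrite (cont_inj Hwf h2 hcw) in h1.
  have h1' := cc_edge h1; apply: (anc_ready hanc hrc h1' nuc').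
have htw : touch_with C u c w by rewrite /touch_with ht hs hcw.
have nmu := tch_notmain Hwf ht.
have [f [hf1 hf2]] := first_exists Hwf u.
have nmf : ~~ in_main C f.
  apply/negP=> /(in_main_conn Hwf) h; move/negP: nmu; apply.
  by rewrite /in_main /same_thread (connect_trans h hf2).
have [v [hv _]] := first_fut Hwf hf1 nmf.
have [_ _ _ _ [r [hr _ _]]] := fork_cond Hwf hv.
have [hs2 hd2] := Hsl2 hv hr (introT orP (or_introl hf2)) htw.
have hvc := thread_pred hr hs2 hd2 hcw.
have nvc : v != c by apply/eqP=> e; subst; have := hnf f; rewrite hv.
have [q [hq1 hq2]] := conn_first hvc nvc.
rewrite -(cont_fun Hwf hr hq1) in hq2.
have [z [hz1 hz2]] := last_exists Hwf u.
have hfz := connect_trans hf2 hz2.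
have hzd : z \in d.
  have [erc|nrc] := eqVneq r c.
    subst; have [d' ->] := hS4 _ _ _ hv hr hfz hz1.
    by rewrite mem_rcons mem_head.
  have hrd := anc_ready hanc hrc (cc_edge hq2) nrc.
  have [s1 [s2 ->]] := hI3 _ _ _ _ hv hr hfz hz1 hrd.
  by rewrite mem_cat mem_head orbT.
by have [] := anc_conn hanc (cc_edge hz2) hzd.
Qed.

End Exec.

Section Inv.
Variables (V : finType) (C : fcomp V).
Hypothesis Hwf : wf_comp C.
Hypothesis Hsl : structured_local_touch C.

Definition Inv (s : config V) : Prop :=
  let: (cur, dq, d) := s in
  [/\ uniq d, anc C d, I3 C d, uniq dq &
      (forall y, y \in dq -> y \notin d /\ ready C d y)] /\
      match cur with
      | Some c => [/\ c \notin d, c \notin dq, ready C d c, Chain C c dq & S4 C c d]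
      | None => exists d' z, [/\ d = rcons d' z, last_node C z & Chain C z dq]
      end.

Lemma index_rcons_in (d : seq V) c u : u \in d -> index u (rcons d c) = index u d.
Proof. by move=> h; rewrite -cats1 index_cat h. Qed.

Lemma index_rcons_last (d : seq V) c : c \notin d -> index c (rcons d c) = size d.
Proof. by move=> h; rewrite -cats1 index_cat (negbTE h) /= eqxx addn0. Qed.

Lemma ready_mono d c y : ready C d y -> ready C (rcons d c) y.
Proof.
move/forallP=> h; apply/forallP=> u; apply/implyP=> hu.
by rewrite mem_rcons inE (implyP (h u) hu) orbT.
Qed.

Lemma app_ok d c : uniq d -> anc C d -> I3 C d -> c \notin d -> ready C d c -> S4 C c d ->
  [/\ uniq (rcons d c), anc C (rcons d c) & I3 C (rcons d c)].
Proof.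
move=> hu ha hi hc hr hs; split.
- by rewrite rcons_uniq hc hu.
- move=> y u; rewrite mem_rcons inE => /orP[/eqP->|hy] he.
    have hud := ready_in hr he.
    rewrite mem_rcons inE hud orbT index_rcons_in // index_rcons_last //.
    by split=> //; rewrite index_mem.
  have [hud hlt] := ha _ _ hy he.
  by rewrite mem_rcons inE hud orbT !index_rcons_in.
- move=> v l r z hf hcr hlz hz; rewrite mem_rcons inE => /orP[/eqP e|hrd].
    subst; have [d' ->] := hs _ _ _ hf hcr hlz hz.
    by exists d', [::]; rewrite -!cats1 -catA.
  have [s1 [s2 ->]] := hi _ _ _ _ hf hcr hlz hz hrd.
  by exists s1, (rcons s2 c); rewrite rcons_cat.
Qed.

Lemma mem_rc d v w : (w \in ready_children C d v) = edge C v w && ready C d w.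
Proof. by rewrite /ready_children mem_filter mem_enum andbT. Qed.

Lemma Inv_init : Inv (Some (Defs.root C), [::], [::]).
Proof.
split; first split=> //.
split=> //.
  + apply/forallP=> u; apply/implyP=> h; by have := root_noparent Hwf u; rewrite h.
  + by apply: ch_main; rewrite connect0.
  + move=> v l z _ h; by have := root_noparent Hwf v; rewrite cont_edge.
Qed.

Lemma Inv_step s1 s2 : seq_step C s1 s2 -> Inv s1 -> Inv s2.
Proof.
case.
-
  move=> v l r dq d hf hr [[hu ha hi hudq hdq] [hvd hvdq hrv hch hs4]].
  have [hu' ha' hi'] := app_ok hu ha hi hvd hrv hs4.
  have [hfl _ hinl _ [r' [hr' hinr _]]] := fork_cond Hwf hf.
  have er := cont_fun Hwf hr hr'; subst r'.
  have hrd : r \notin d.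
    apply/negP=> h; have [h' _] := ha _ _ h (cont_edge hr); by rewrite h' in hvd.
  have hld : l \notin d.
    apply/negP=> h; have [h' _] := ha _ _ h (fut_edge hf); by rewrite h' in hvd.
  have nlr : l != r.
    apply/eqP=> e; subst; by move/forallP: hfl => /(_ v); rewrite hr.
  have hldq : l \notin dq.
    apply/negP=> h; have [v0 [l0 [_ hc]]] := Chain_elems hch h.
    by move/forallP: hfl => /(_ v0); rewrite hc.
  split; first split=> //.
  + rewrite rcons_uniq hudq andbT; apply/negP=> h.
    have [_ hry] := hdq _ h; have := ready_in hry (cont_edge hr); by rewrite (negbTE hvd).
  + move=> y; rewrite mem_rcons inE => /orP[/eqP->|hy].
      split.
        by rewrite mem_rcons inE negb_or hrd andbT eq_sym (edge_neq Hwf (cont_edge hr)).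
      apply/forallP=> u; apply/implyP=> he.
      by rewrite (indeg_uniq hinr he (cont_edge hr)) mem_rcons mem_head.
    have [hyd hyr] := hdq _ hy; split; last exact: ready_mono.
    rewrite mem_rcons inE negb_or hyd andbT; apply/eqP=> e; subst.
    by rewrite hy in hvdq.
  + split.
    * by rewrite mem_rcons inE negb_or hld andbT eq_sym (edge_neq Hwf (fut_edge hf)).
    * by rewrite mem_rcons inE negb_or nlr.
    * apply/forallP=> u; apply/implyP=> he.
      by rewrite (indeg_uniq hinl he (fut_edge hf)) mem_rcons mem_head.
    * exact: ch_fut (connect0 _ _) hfl hf hr hch.
    * move=> v0 l0 z _ hc; by move/forallP: hfl => /(_ v0); rewrite hc.
-
  move=> v dq d hnf hrc [[hu ha hi hudq hdq] [hvd hvdq hrv hch hs4]].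
  have [hu' ha' hi'] := app_ok hu ha hi hvd hrv hs4.
  split; first split=> //.
  + move=> y hy; have [hyd hyr] := hdq _ hy; split; last exact: ready_mono.
    rewrite mem_rcons inE negb_or hyd andbT; apply/eqP=> e; subst.
    by rewrite hy in hvdq.
  + exists d, v; split=> //.
    apply/forallP=> w; apply/negP=> hw.
    have hrw := childA Hwf Hsl ha hi hs4 hrv hvd hnf hw.
    have : w \in ready_children C (rcons d v) v by rewrite mem_rc hrw cont_edge.
    by rewrite hrc.
-
  move=> v w rest dq d hnf hp [[hu ha hi hudq hdq] [hvd hvdq hrv hch hs4]].
  have [hu' ha' hi'] := app_ok hu ha hi hvd hrv hs4.
  have hdqd : forall y, y \in dq -> y \notin d := fun y hy => (hdq y hy).1.
  have hcont : forall y, y \in w :: rest -> cont C v y /\ ready C (rcons d v) y.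
    move=> y hy; move: hy; rewrite (perm_mem hp) mem_rc => /andP[he hry].
    split=> //; apply: (childB Hwf Hsl ha hch hvd hdqd hvdq hnf he hry).
  have [hvw hrw] := hcont w (mem_head _ _).
  have huq : uniq (w :: rest).
    by rewrite (perm_uniq hp) /ready_children filter_uniq // enum_uniq.
  have erest : rest = [::].
    case: rest hp hcont huq => // y rest _ hcont huq.
    have hyy : y \in w :: y :: rest by rewrite !inE eqxx orbT.
    have [hvy _] := hcont y hyy.
    have e := cont_fun Hwf hvw hvy; subst.
    by move: huq; rewrite /= mem_head.
  subst rest; rewrite cats0.
  split; first split=> //.
  + move=> y hy; have [hyd hyr] := hdq _ hy; split; last exact: ready_mono.
    rewrite mem_rcons inE negb_or hyd andbT; apply/eqP=> e; subst.
    by rewrite hy in hvdq.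
  + split=> //.
    * rewrite mem_rcons inE negb_or eq_sym (edge_neq Hwf (cont_edge hvw)) /=.
      apply/negP=> h; have [h' _] := ha _ _ h (cont_edge hvw); by rewrite h' in hvd.
    * apply/negP=> h; have [v0 [l0 [hf0 hc0]]] := Chain_elems hch h.
      have e := cont_inj Hwf hc0 hvw; subst.
      by have := hnf l0; rewrite hf0.
    * apply: Chain_cont hch (connect1 hvw).
    * move=> v0 l0 z hf0 hc0; have e := cont_inj Hwf hc0 hvw; subst.
      by have := hnf l0; rewrite hf0.
-
  move=> w dq d [[hu ha hi hudq hdq] [d' [z [ed hz hch]]]].
  move: hudq; rewrite rcons_uniq => /andP[hwdq hudq].
  have hww : w \in rcons dq w by rewrite mem_rcons mem_head.
  have [hwd hwr] := hdq w hww.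
  have [f [v [hfz hff hfv hvw hchv]]] := Chain_rcons hch.
  split; first split=> //.
  + by move=> y hy; apply: hdq; rewrite mem_rcons inE hy orbT.
  + split=> //.
    * exact: Chain_cont hchv (connect1 hvw).
    * move=> v0 l0 z0 hf0 hc0 hl0 hz0.
      have e := cont_inj Hwf hc0 hvw; subst v0.
      have e := fut_uniq Hwf hf0 hfv; subst l0.
      have e := thread_last Hwf hz0 hz hl0 hfz; subst z0.
      by exists d'.
Qed.

Lemma Inv_steps s1 s2 : seq_steps C s1 s2 -> Inv s1 -> Inv s2.
Proof.
elim=> // c1 c2 c3 h _ IH hi; apply: IH; exact: Inv_step h hi.
Qed.

End Inv.

Lemma split2 (T : eqType) (s : seq T) a b : a \in s -> b \in s -> index a s < index b s ->
  exists s1 s2 s3, s = s1 ++ a :: s2 ++ b :: s3.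
Proof.
elim: s => // x s IH; rewrite !inE /=.
have [exa|nxa] := eqVneq x a.
  subst x; have [->|nab] := eqVneq a b; first by rewrite ltnn.
  move=> _ hb _; have hbs : b \in s.
    by [].
  case/splitPr: hbs => s2 s3; by exists [::], s2, s3.
have [exb|nxb] := eqVneq x b; first by [].
rewrite /= => ha hb hlt.
have [s1 [s2 [s3 ->]]] := IH ha hb hlt.
by exists (x :: s1), s2, s3.
Qed.

Lemma index_adj (T : eqType) (s1 s2 : seq T) z r : uniq (s1 ++ z :: r :: s2) ->
  index z (s1 ++ z :: r :: s2) < index r (s1 ++ z :: r :: s2).
Proof.
rewrite cat_uniq => /and3P[_ hdis hu].
have hz : z \notin s1 by apply/negP=> h; move/hasP: hdis; apply; exists z; rewrite ?inE ?eqxx.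
have hr : r \notin s1 by apply/negP=> h; move/hasP: hdis; apply; exists r; rewrite ?inE ?eqxx ?orbT.
move: hu => /= /andP[]; rewrite inE negb_or => /andP[nzr _] _.
rewrite !index_cat (negbTE hz) (negbTE hr) /= eqxx.
by rewrite (negbTE nzr) eqxx ltn_add2l.
Qed.

Theorem mainTheorem6 (V : finType) (C : fcomp V) (ex : seq V) :
  wf_comp C -> structured_local_touch C -> sequential_execution C ex ->
  (* future parent of every touch is executed before its local parent *)
  (forall v1 u2 x, touch_with C v1 u2 x ->
     exists s1 s2 s3, ex = s1 ++ v1 :: s2 ++ u2 :: s3) /\
  (* the right child of every fork is executed immediately after the last node
     of the future thread spawned at that fork *)
  (forall v l r z, fut C v l -> cont C v r -> same_thread C l z -> last_node C z ->
     exists s1 s2, ex = s1 ++ z :: r :: s2).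
Proof.
move=> Hwf Hsl Hex.
have [[hu ha hi _ _] [d' [z [ed hz hch]]]] := Inv_steps Hwf Hsl Hex (Inv_init Hwf).
have hfl : last_node C (final C).
  apply/forallP=> w; apply/negP=> h.
  have := outdeg_gt0 (cont_edge h).
  case: Hwf => _ [_ [hout _]]; have := hout (final C); by rewrite eqxx => ->.
have hmain : connect (cont C) (Defs.root C) (final C).
  apply: (in_main_conn Hwf); by case: Hwf => _ [_ [_ [_ [_ [h _]]]]].
have ezf := thread_last Hwf hz hfl (Chain_nil hch) hmain.
have hfin : final C \in ex by rewrite ed -ezf mem_rcons mem_head.
have hreach : forall x, connect (edge C) x (final C).
  elim/(wf_fwd (@acyc _ _ Hwf)) => x IH.
  have [->|nxf] := eqVneq x (final C); first exact: connect0.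
  have : 0 < outdeg C x.
    case: Hwf => _ [_ [hout _]]; have := hout x; rewrite (negbTE nxf).
    by case/andP.
  case/card_gt0P => w; rewrite inE => hw.
  exact: connect_trans (connect1 hw) (IH w hw).
have hall : forall x, x \in ex /\ index x ex <= index (final C) ex.
  move=> x; apply: (anc_conn ha (hreach x) hfin).
have hI3 : forall v l r z0, fut C v l -> cont C v r -> connect (cont C) l z0 -> last_node C z0 ->
    exists s1 s2, ex = s1 ++ z0 :: r :: s2.
  move=> v l r z0 hf hr hl hz0; apply: (hi v l r z0 hf hr hl hz0); exact: (hall r).1.
split; last first.
  move=> v l r z0 hf hr hs hz0.
  have [hfl' _ _ _ _] := fork_cond Hwf hf.
  exact: hI3 v l r z0 hf hr (same_first hfl' hs) hz0.
move=> v1 u2 x htw.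
have htw' := htw; move: htw' => /and3P[ht hs hux].
have nmu := tch_notmain Hwf ht.
have [f [hf1 hf2]] := first_exists Hwf v1.
have nmf : ~~ in_main C f.
  apply/negP=> /(in_main_conn Hwf) h; move/negP: nmu; apply.
  by rewrite /in_main /same_thread (connect_trans h hf2).
have [v [hv _]] := first_fut Hwf hf1 nmf.
have [_ _ _ _ [r [hr _ hnt]]] := fork_cond Hwf hv.
have [hs2 hd2] := Hsl2 Hsl hv hr (introT orP (or_introl hf2)) htw.
have hvu := thread_pred Hwf hr hs2 hd2 hux.
have nvu : v != u2.
  apply/eqP=> e; rewrite -e in hux.
  have e2 := cont_fun Hwf hr hux.
  move/negP: hnt; apply; rewrite e2; apply/existsP; exists v1; apply/existsP; exists u2; exact: htw.
have [q [hq1 hq2]] := conn_first hvu nvu.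
rewrite -(cont_fun Hwf hr hq1) in hq2.
have [z0 [hz1 hz2]] := last_exists Hwf v1.
have [s1 [s2 es]] := hI3 _ _ _ _ hv hr (connect_trans hf2 hz2) hz1.
have h1 := anc_conn ha (cc_edge hz2) (hall z0).1.
have h2 := anc_conn ha (cc_edge hq2) (hall u2).1.
have h3 : index z0 ex < index r ex by rewrite es; apply: index_adj; rewrite -es.
apply: split2 (hall v1).1 (hall u2).1 _.
exact: leq_ltn_trans h1.2 (leq_trans h3 h2.2).
Qed.
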